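(* (Convergence of the one-dimensional Crank–Nicolson collocation scheme.) Consider the nonlocal problem $$\partial_t u(x,t)+\int_a^b\frac{u(x,t)-u(y,t)}{|x-y|^{\gamma}}\,dy=f(x,t),\qquad (x,t)\in(a,b)\times(0,T],$$ with $0<\gamma<1$, Dirichlet boundary values $u(a,t),u(b,t)$ and initial value $u(x,0)=u_0(x)$, and let $U^k\in\mathbb R^{2M-1}$, $k=0,\dots,N$, be the Crank–Nicolson collocation approximation defined in the context. Assume the exact solution $u$ is smooth enough that the truncation residual satisfies $|R^{k-1/2}_i|\le C_R(\tau^2+h^{4-\gamma})$ for all $i=1,\dots,2M-1$, $k=1,\dots,N$, with a constant $C_R$ independent of $\tau,h,i,k$. Then, with $C_a=\frac{2(b-a)^{1-\gamma}}{1-\gamma}$, $$\max_{1\le i\le 2M-1}\big|u(x_{i/2},t_k)-U^k_i\big|\le C_R\,T\,e^{TC_a}\,(\tau^2+h^{4-\gamma}),\qquad k=0,1,\dots,N;$$ that is, the error is $\mathcal O(\tau^2+h^{4-\gamma})$.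
   Context: Fix real numbers $a<b$, an exponent $\gamma\in(0,1)$ and an integer $M\ge 2$. Set $h=(b-a)/M$ and $x_s=a+sh$ for $s\in\{0,\tfrac12,1,\tfrac32,\dots,M\}$. The piecewise quadratic Lagrange basis functions on $[a,b]$ are: for integers $0\le l\le M$, $\phi_l(x)=\frac{x-x_{l-1}}{h}\cdot\frac{2x-(x_l+x_{l-1})}{h}$ for $x\in[x_{l-1},x_l]\cap[a,b]$, $\phi_l(x)=\frac{x_{l+1}-x}{h}\cdot\frac{(x_{l+1}+x_l)-2x}{h}$ for $x\in[x_l,x_{l+1}]\cap[a,b]$, and $\phi_l(x)=0$ otherwise; and for $l=1,\dots,M$, $\phi_{l-\frac12}(x)=\frac{4(x-x_{l-1})(x_l-x)}{h^2}$ for $x\in[x_{l-1},x_l]$ and $0$ otherwise. For $i\in\{1,\dots,2M-1\}$ and $j\in\{0,1,\dots,2M\}$ define $$d_i=\int_a^b\frac{dy}{|x_{i/2}-y|^{\gamma}},\qquad g_{ij}=\int_a^b\frac{\phi_{j/2}(y)}{|x_{i/2}-y|^{\gamma}}\,dy .$$ The one-dimensional collocation matrix is the $(2M-1)\times(2M-1)$ matrix $\mathcal A$ with entries $A_{ij}=\delta_{ij}d_i-g_{ij}$, $i,j\in\{1,\dots,2M-1\}$. The following fact, established in earlier work, may be used: $g_{ij}>0$ for all $i,j\in\{1,\dots,2M-1\}$, and $\mathcal A$ is strictly diagonally dominant by rows. Time discretization: $T>0$, $N\ge1$, $\tau=T/N$, $t_k=k\tau$, $t_{k-1/2}=(t_{k-1}+t_k)/2$.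 The Crank–Nicolson collocation scheme: $U^0_i=u_0(x_{i/2})$, and for $k=1,\dots,N$, $$\Big(I+\frac{\tau}{2}\mathcal A\Big)U^k=\Big(I-\frac{\tau}{2}\mathcal A\Big)U^{k-1}+\tau F^{k-1/2}+\tau K^{k-1/2},$$ where $F^{k-1/2}_i=f(x_{i/2},t_{k-1/2})$ and $K^{k-1/2}_i=\tfrac12 g_{i,0}\big(u(a,t_{k-1})+u(a,t_k)\big)+\tfrac12 g_{i,2M}\big(u(b,t_{k-1})+u(b,t_k)\big)$ (boundary contributions). The truncation residual $R^{k-1/2}\in\mathbb R^{2M-1}$ is defined by inserting the exact nodal values $u^k=(u(x_{i/2},t_k))_{i=1}^{2M-1}$ into the scheme: $$\tau R^{k-1/2}=\Big(I+\frac{\tau}{2}\mathcal A\Big)u^k-\Big(I-\frac{\tau}{2}\mathcal A\Big)u^{k-1}-\tau F^{k-1/2}-\tau K^{k-1/2}.$$ *)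

(* Defs.v *)
From Stdlib Require Import Reals Lra Lia.
Open Scope R_scope.

Definition mesh (a b : R) (M : nat) : R := (b - a) / INR M.
Definition xs (a b : R) (M : nat) (s : R) : R := a + s * mesh a b M.
Definition node (a b : R) (M : nat) (j : nat) : R := xs a b M (INR j / 2).

(* Piecewise quadratic Lagrange basis function phi_{j/2} on [a,b]. *)
Definition phi (a b : R) (M : nat) (j : nat) (y : R) : R :=
  let h := mesh a b M in
  if Nat.even j then
    let l := INR j / 2 in
    let xm := xs a b M (l - 1) in
    let x0 := xs a b M l in
    let xp := xs a b M (l + 1) in
    if Rle_dec a y then if Rle_dec y b then
      if Rle_dec xm y then if Rle_dec y x0 then
        ((y - xm) / h) * ((2 * y - (x0 + xm)) / h)
      else
      if Rle_dec x0 y then if Rle_dec y xp then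
        ((xp - y) / h) * (((xp + x0) - 2 * y) / h)
      else 0 else 0
      else
      if Rle_dec x0 y then if Rle_dec y xp then
        ((xp - y) / h) * (((xp + x0) - 2 * y) / h)
      else 0 else 0
    else 0 else 0
  else
    let l := (INR j + 1) / 2 in
    let xm := xs a b M (l - 1) in
    let x0 := xs a b M l in
    if Rle_dec xm y then if Rle_dec y x0 then
      4 * (y - xm) * (x0 - y) / (h * h)
    else 0 else 0.

(* Improper Riemann integral of f over [a,b] with a (possible) singularity
   at an interior point c: I is the limit of
   int_a^{c-e1} f + int_{c+e2}^b f as e1, e2 -> 0+ independently. *)
Definition improper_int (f : R -> R) (a b c I : R) : Prop :=
  forall eps, 0 < eps -> exists delta, 0 < delta /\
    forall e1 e2, 0 < e1 < delta -> 0 < e2 < delta ->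
      exists (pr1 : Riemann_integrable f a (c - e1))
             (pr2 : Riemann_integrable f (c + e2) b),
        Rabs (RiemannInt pr1 + RiemannInt pr2 - I) < eps.

Definition kern (gamma x y : R) : R := / Rpower (Rabs (x - y)) gamma.

Definition Amat (d : nat -> R) (g : nat -> nat -> R) (i j : nat) : R :=
  (if Nat.eqb i j then d i else 0) - g i j.

Definition Amul (M : nat) (d : nat -> R) (g : nat -> nat -> R)
  (v : nat -> R) (i : nat) : R :=
  sum_f 1 (2 * M - 1) (fun j => Amat d g i j * v j).

(* Main.v *)
Require Import Defs.
From Stdlib Require Import Reals Lra Lia.
From Coquelicot Require Import Coquelicot.
Open Scope R_scope.

Lemma dleft (c p y : R) : y < c ->
  derivable_pt_lim (fun z => Rpower (c - z) p) y (- (p * Rpower (c - y) (p - 1))).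
Proof.
  intro H.
  assert (H1 : derivable_pt_lim (fun z => c - z) y (-1)).
  { replace (-1) with (0 - 1) by ring.
    apply (derivable_pt_lim_minus (fun _ => c) (fun z => z)).
    apply derivable_pt_lim_const. apply derivable_pt_lim_id. }
  pose proof (derivable_pt_lim_comp (fun z => c - z) (fun x => Rpower x p) y _ _ H1
     (derivable_pt_lim_power (c - y) p ltac:(lra))) as H2.
  replace (- (p * Rpower (c - y) (p - 1))) with (p * Rpower (c - y) (p - 1) * -1) by ring.
  exact H2.
Qed.

Lemma dright (c p y : R) : c < y ->
  derivable_pt_lim (fun z => Rpower (z - c) p) y (p * Rpower (y - c) (p - 1)).
Proof.
  intro H.
  assert (H1 : derivable_pt_lim (fun z => z - c) y 1).
  { replace 1 with (1 - 0) by ring.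
    apply (derivable_pt_lim_minus (fun z => z) (fun _ => c)).
    apply derivable_pt_lim_id. apply derivable_pt_lim_const. }
  pose proof (derivable_pt_lim_comp (fun z => z - c) (fun x => Rpower x p) y _ _ H1
     (derivable_pt_lim_power (y - c) p ltac:(lra))) as H2.
  replace (p * Rpower (y - c) (p - 1)) with (p * Rpower (y - c) (p - 1) * 1) by ring.
  exact H2.
Qed.

Lemma int_left (gamma c a e : R) (pr : Riemann_integrable (fun y => kern gamma c y) a (c - e)) :
  0 < gamma < 1 -> 0 < e -> a < c - e ->
  RiemannInt pr <= Rpower (c - a) (1 - gamma) / (1 - gamma).
Proof.
  intros Hg He Ha.
  rewrite <- RInt_Reals.
  set (F := fun y => - Rpower (c - y) (1 - gamma) / (1 - gamma)).
  set (G := fun y => Rpower (c - y) (- gamma)).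
  assert (HD : forall y, y < c -> is_derive F y (G y)).
  { intros y Hy. apply is_derive_Reals. unfold F, G.
    pose proof (dleft c (1 - gamma) y Hy) as H.
    apply (derivable_pt_lim_scal _ (- / (1 - gamma))) in H.
    unfold mult_real_fct in H.
    replace (1 - gamma - 1) with (- gamma) in H by ring.
    replace (Rpower (c - y) (- gamma)) with
      (- / (1 - gamma) * - ((1 - gamma) * Rpower (c - y) (- gamma))) by (field; lra).
    eapply derivable_pt_lim_ext; [|exact H].
    intro z; simpl. field; lra. }
  assert (HI : is_RInt G a (c - e) (minus (F (c - e)) (F a))).
  { apply (@is_RInt_derive R_CompleteNormedModule F G).
    - intros x Hx. apply HD. rewrite Rmin_left, Rmax_right in Hx; lra.
    - intros x Hx. rewrite Rmin_left, Rmax_right in Hx by lra.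
      apply (@ex_derive_continuous R_AbsRing R_NormedModule G). eexists. apply is_derive_Reals.
      apply dleft. lra. }
  rewrite (RInt_ext _ G).
  2:{ intros x Hx. rewrite Rmin_left, Rmax_right in Hx by lra.
      unfold kern, G. rewrite Rpower_Ropp. rewrite Rabs_right by lra. reflexivity. }
  rewrite (is_RInt_unique _ _ _ _ HI).
  change (F (c - e) - F a <= Rpower (c - a) (1 - gamma) / (1 - gamma)).
  unfold F.
  assert (0 < Rpower (c - (c - e)) (1 - gamma)) by (unfold Rpower; apply exp_pos).
  assert (0 < / (1 - gamma)) by (apply Rinv_0_lt_compat; lra).
  unfold Rdiv. nra.
Qed.

Lemma int_right (gamma c b e : R) (pr : Riemann_integrable (fun y => kern gamma c y) (c + e) b) :
  0 < gamma < 1 -> 0 < e -> c + e < b ->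
  RiemannInt pr <= Rpower (b - c) (1 - gamma) / (1 - gamma).
Proof.
  intros Hg He Ha.
  rewrite <- RInt_Reals.
  set (F := fun y => Rpower (y - c) (1 - gamma) / (1 - gamma)).
  set (G := fun y => Rpower (y - c) (- gamma)).
  assert (HD : forall y, c < y -> is_derive F y (G y)).
  { intros y Hy. apply is_derive_Reals. unfold F, G.
    pose proof (dright c (1 - gamma) y Hy) as H.
    apply (derivable_pt_lim_scal _ (/ (1 - gamma))) in H.
    unfold mult_real_fct in H.
    replace (1 - gamma - 1) with (- gamma) in H by ring.
    replace (Rpower (y - c) (- gamma)) with
      (/ (1 - gamma) * ((1 - gamma) * Rpower (y - c) (- gamma))) by (field; lra).
    eapply derivable_pt_lim_ext; [|exact H].
    intro z; simpl. field; lra. }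
  assert (HI : is_RInt G (c + e) b (minus (F b) (F (c + e)))).
  { apply (@is_RInt_derive R_CompleteNormedModule F G).
    - intros x Hx. apply HD. rewrite Rmin_left, Rmax_right in Hx; lra.
    - intros x Hx. rewrite Rmin_left, Rmax_right in Hx by lra.
      apply (@ex_derive_continuous R_AbsRing R_NormedModule G). eexists. apply is_derive_Reals.
      apply dright. lra. }
  rewrite (RInt_ext _ G).
  2:{ intros x Hx. rewrite Rmin_left, Rmax_right in Hx by lra.
      unfold kern, G. rewrite Rpower_Ropp. rewrite Rabs_left by lra.
      replace (- (c - x)) with (x - c) by ring. reflexivity. }
  rewrite (is_RInt_unique _ _ _ _ HI).
  change (F b - F (c + e) <= Rpower (b - c) (1 - gamma) / (1 - gamma)).
  unfold F.
  assert (0 < Rpower (c + e - c) (1 - gamma)) by (unfold Rpower; apply exp_pos).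
  assert (0 < / (1 - gamma)) by (apply Rinv_0_lt_compat; lra).
  unfold Rdiv. nra.
Qed.

Lemma phi_le1 a b M j y : 0 < mesh a b M -> phi a b M j y <= 1.
Proof.
  intro Hh. unfold phi. set (h := mesh a b M) in *.
  assert (Hx : forall l, xs a b M (l + 1) = xs a b M l + h /\ xs a b M (l - 1) = xs a b M l - h).
  { intro l; unfold xs; fold h; split; ring. }
  assert (K1 : forall s, 0 <= s <= 1 -> s * (2 * s - 1) <= 1) by (intros s Hs; assert (s*s <= s) by nra; nra).
  assert (K2 : forall s, 0 <= s <= 1 -> 4 * s * (1 - s) <= 1) by (intros s Hs; pose proof (pow2_ge_0 (2*s-1)); nra).
  destruct (Nat.even j).
  - set (l := INR j / 2). destruct (Hx l) as [E1 E2]. rewrite E1, E2.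
    set (x0 := xs a b M l).
    assert (A1 : forall y, x0 - h <= y <= x0 ->
      (y - (x0 - h)) / h * ((2 * y - (x0 + (x0 - h))) / h) <= 1).
    { intros z Hz. replace ((2 * z - (x0 + (x0 - h))) / h) with (2 * ((z - (x0 - h))/h) - 1)
        by (field; lra). apply K1. split.
      apply Rmult_le_pos; [lra| left; apply Rinv_0_lt_compat; lra].
      apply (Rmult_le_reg_r h); [lra|]. unfold Rdiv. rewrite Rmult_assoc, Rinv_l; lra. }
    assert (A2 : forall y, x0 <= y <= x0 + h ->
      (x0 + h - y) / h * ((x0 + h + x0 - 2 * y) / h) <= 1).
    { intros z Hz. replace ((x0 + h + x0 - 2 * z) / h) with (2 * ((x0 + h - z)/h) - 1)
        by (field; lra). apply K1. split.
      apply Rmult_le_pos; [lra| left; apply Rinv_0_lt_compat; lra].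
      apply (Rmult_le_reg_r h); [lra|]. unfold Rdiv. rewrite Rmult_assoc, Rinv_l; lra. }
    repeat (destruct Rle_dec); try lra; try (apply A1; lra); try (apply A2; lra).
  - set (l := (INR j + 1) / 2). destruct (Hx l) as [E1 E2]. rewrite E2.
    set (x0 := xs a b M l).
    repeat (destruct Rle_dec); try lra.
    replace (4 * (y - (x0 - h)) * (x0 - y) / (h * h)) with
      (4 * ((y - (x0 - h)) / h) * (1 - (y - (x0 - h)) / h)) by (field; lra).
    apply K2. split.
    apply Rmult_le_pos; [lra| left; apply Rinv_0_lt_compat; lra].
    apply (Rmult_le_reg_r h); [lra|]. unfold Rdiv. rewrite Rmult_assoc, Rinv_l; lra.
Qed.

Lemma g_le_d gamma a b M c j d g : a < c < b -> 0 < mesh a b M ->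
  improper_int (fun y => kern gamma c y) a b c d ->
  improper_int (fun y => phi a b M j y * kern gamma c y) a b c g -> g <= d.
Proof.
  intros Hc Hh Hd Hg.
  destruct (Rle_dec g d) as [|Hn]; [assumption|]. exfalso.
  set (eps := (g - d) / 2).
  destruct (Hd eps ltac:(unfold eps; lra)) as [d1 [Hd1 P1]].
  destruct (Hg eps ltac:(unfold eps; lra)) as [d2 [Hd2 P2]].
  set (e := Rmin (Rmin d1 d2) (Rmin (c - a) (b - c)) / 2).
  assert (He : 0 < e /\ e < d1 /\ e < d2 /\ e < c - a /\ e < b - c).
  { unfold e, Rmin; repeat destruct Rle_dec; lra. }
  destruct (P1 e e ltac:(lra) ltac:(lra)) as [p1 [p2 Q1]].
  destruct (P2 e e ltac:(lra) ltac:(lra)) as [q1 [q2 Q2]].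
  assert (kp : forall y, 0 < kern gamma c y).
  { intro y; unfold kern, Rpower. apply Rinv_0_lt_compat, exp_pos. }
  assert (R1 : RiemannInt q1 <= RiemannInt p1).
  { apply RiemannInt_P19; [lra|]. intros x _.
    pose proof (phi_le1 a b M j x Hh). pose proof (kp x). nra. }
  assert (R2 : RiemannInt q2 <= RiemannInt p2).
  { apply RiemannInt_P19; [lra|]. intros x _.
    pose proof (phi_le1 a b M j x Hh). pose proof (kp x). nra. }
  apply Rabs_def2 in Q1. apply Rabs_def2 in Q2. unfold eps in *. lra.
Qed.

Lemma d_le gamma a b c d : a < c < b -> 0 < gamma < 1 ->
  improper_int (fun y => kern gamma c y) a b c d ->
  d <= 2 * Rpower (b - a) (1 - gamma) / (1 - gamma).
Proof.
  intros Hc Hga Hd.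
  set (P := Rpower (b - a) (1 - gamma) / (1 - gamma)).
  assert (L : Rpower (c - a) (1 - gamma) / (1 - gamma) <= P /\
              Rpower (b - c) (1 - gamma) / (1 - gamma) <= P).
  { assert (0 < / (1 - gamma)) by (apply Rinv_0_lt_compat; lra).
    unfold P, Rdiv; split; apply Rmult_le_compat_r; try lra;
    apply Rle_Rpower_l; lra. }
  replace (2 * Rpower (b - a) (1 - gamma) / (1 - gamma)) with (2 * P) by (unfold P, Rdiv; ring).
  destruct (Rle_dec d (2 * P)) as [|Hn]; [assumption|]. exfalso.
  set (eps := (d - 2 * P) / 2).
  destruct (Hd eps ltac:(unfold eps; lra)) as [d1 [Hd1 P1]].
  set (e := Rmin d1 (Rmin (c - a) (b - c)) / 2).
  assert (He : 0 < e /\ e < d1 /\ e < c - a /\ e < b - c).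
  { unfold e, Rmin; repeat destruct Rle_dec; lra. }
  destruct (P1 e e ltac:(lra) ltac:(lra)) as [p1 [p2 Q1]].
  pose proof (int_left gamma c a e p1 Hga ltac:(lra) ltac:(lra)).
  pose proof (int_right gamma c b e p2 Hga ltac:(lra) ltac:(lra)).
  apply Rabs_def2 in Q1. unfold eps in *. lra.
Qed.

Lemma Amul_minus M d g v w i :
  Amul M d g (fun j => v j - w j) i = Amul M d g v i - Amul M d g w i.
Proof.
  unfold Amul, sum_f. rewrite <- minus_sum. apply sum_eq. intros; ring.
Qed.

Lemma delta_sum (i : nat) (c : R) (m : nat) :
  sum_f_R0 (fun x => if Nat.eqb i (x + 1) then c else 0) m =
  if andb (Nat.leb 1 i) (Nat.leb i (m + 1)) then c else 0.
Proof.
  induction m as [|m IH].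
  - simpl. destruct i as [|[|i]]; simpl; reflexivity.
  - simpl sum_f_R0. rewrite IH.
    replace (S m + 1)%nat with (S (m + 1)) by lia.
    destruct (Nat.eqb_spec i (S (m + 1))) as [E|E];
    destruct (Nat.leb_spec 1 i); destruct (Nat.leb_spec i (m + 1));
    destruct (Nat.leb_spec i (S (m + 1))); simpl; try lia; ring.
Qed.

Definition Off M d g (v : nat -> R) i :=
  sum_f 1 (2 * M - 1) (fun j => if Nat.eqb i j then 0 else Amat d g i j * v j).
Definition Soff M d g i :=
  sum_f 1 (2 * M - 1) (fun j => if Nat.eqb i j then 0 else Rabs (Amat d g i j)).

Lemma Amul_split M d g v i : (1 <= i <= 2 * M - 1)%nat ->
  Amul M d g v i = Amat d g i i * v i + Off M d g v i.
Proof.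
  intro Hi. unfold Amul, Off, sum_f.
  transitivity (sum_f_R0 (fun x => (if Nat.eqb i (x + 1) then Amat d g i i * v i else 0)
     + (if Nat.eqb i (x + 1) then 0 else Amat d g i (x + 1)%nat * v (x + 1)%nat)) (2 * M - 1 - 1)%nat).
  { apply sum_eq. intros x _. destruct (Nat.eqb_spec i (x + 1)) as [E|E].
    - rewrite <- E. ring.
    - ring. }
  rewrite plus_sum, delta_sum.
  destruct (Nat.leb_spec 1 i); destruct (Nat.leb_spec i (2 * M - 1 - 1 + 1)); simpl;
    try lia; reflexivity.
Qed.

Lemma Off_bound M d g v i B : (1 <= M)%nat -> 0 <= B ->
  (forall j, (1 <= j <= 2 * M - 1)%nat -> Rabs (v j) <= B) ->
  Rabs (Off M d g v i) <= Soff M d g i * B.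
Proof.
  intros HM HB Hv. unfold Off, Soff, sum_f.
  eapply Rle_trans; [apply Rabs_triang_gen|].
  rewrite Rmult_comm, scal_sum.
  apply sum_Rle. intros n Hn. cbv beta.
  destruct (Nat.eqb i (n + 1)).
  - rewrite Rabs_R0, Rmult_0_l. lra.
  - rewrite Rabs_mult. apply Rmult_le_compat_l; [apply Rabs_pos|].
    apply Hv. lia.
Qed.

Lemma argmax (v : nat -> R) (n : nat) : (1 <= n)%nat ->
  exists i, (1 <= i <= n)%nat /\ forall j, (1 <= j <= n)%nat -> Rabs (v j) <= Rabs (v i).
Proof.
  induction n as [|n IH]; intro Hn; [lia|].
  destruct (Nat.eq_dec n 0) as [->|Hn0].
  - exists 1%nat. split; [lia|]. intros j Hj. replace j with 1%nat by lia. lra.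
  - destruct (IH ltac:(lia)) as [i [Hi Hm]].
    destruct (Rle_dec (Rabs (v (S n))) (Rabs (v i))).
    + exists i. split; [lia|]. intros j Hj.
      destruct (Nat.eq_dec j (S n)) as [->|]; [assumption|]. apply Hm; lia.
    + exists (S n). split; [lia|]. intros j Hj.
      destruct (Nat.eq_dec j (S n)) as [->|]; [lra|].
      specialize (Hm j ltac:(lia)). lra.
Qed.

Lemma step M d g tau C rho B (x y : nat -> R) :
  (1 <= M)%nat -> 0 < tau -> 0 <= B -> 0 <= rho ->
  (forall i, (1 <= i <= 2 * M - 1)%nat -> 0 <= Amat d g i i <= C) ->
  (forall i, (1 <= i <= 2 * M - 1)%nat -> Soff M d g i < Rabs (Amat d g i i)) ->
  (forall j, (1 <= j <= 2 * M - 1)%nat -> Rabs (y j) <= B) ->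
  (forall i, (1 <= i <= 2 * M - 1)%nat -> exists r, Rabs r <= tau * rho /\
     x i + tau / 2 * Amul M d g x i = y i - tau / 2 * Amul M d g y i + r) ->
  forall i, (1 <= i <= 2 * M - 1)%nat -> Rabs (x i) <= (1 + tau * C) * B + tau * rho.
Proof.
  intros HM Ht HB Hr HA HS Hy Hx.
  destruct (argmax x (2 * M - 1) ltac:(lia)) as [m [Hm Hmax]].
  intros i Hi. eapply Rle_trans; [apply Hmax; exact Hi|]. clear i Hi.
  destruct (Hx m Hm) as [r [Hrr E]].
  rewrite !(Amul_split M d g _ m Hm) in E.
  pose proof (HA m Hm) as [A0 AC]. pose proof (HS m Hm) as HSm.
  rewrite Rabs_pos_eq in HSm by lra.
  set (A := Amat d g m m) in *. set (S := Soff M d g m) in *.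
  set (X := Rabs (x m)).
  assert (X0 : 0 <= X) by apply Rabs_pos.
  assert (S0 : 0 <= S).
  { unfold S, Soff, sum_f. apply cond_pos_sum. intro n. destruct Nat.eqb; [lra|apply Rabs_pos]. }
  pose proof (Off_bound M d g x m X HM X0 Hmax) as Ox. fold S in Ox.
  pose proof (Off_bound M d g y m B HM HB Hy) as Oy. fold S in Oy.
  set (ox := Off M d g x m) in *. set (oy := Off M d g y m) in *.
  assert (E2 : x m * (1 + tau / 2 * A) = y m * (1 - tau / 2 * A) - tau / 2 * oy - tau / 2 * ox + r)
    by lra.
  assert (H1 : Rabs (x m * (1 + tau / 2 * A)) = X * (1 + tau / 2 * A)).
  { rewrite Rabs_mult. unfold X. rewrite (Rabs_pos_eq (1 + _)); [reflexivity|].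
    assert (0 <= tau / 2 * A) by (apply Rmult_le_pos; lra). lra. }
  assert (H2 : Rabs (y m * (1 - tau / 2 * A)) <= B * (1 + tau / 2 * A)).
  { rewrite Rabs_mult. apply Rmult_le_compat; try apply Rabs_pos.
    apply Hy; exact Hm.
    assert (0 <= tau / 2 * A) by (apply Rmult_le_pos; lra).
    apply Rabs_le. lra. }
  assert (H3 : Rabs (tau / 2 * oy) <= tau / 2 * (S * B)).
  { rewrite Rabs_mult, (Rabs_pos_eq (tau / 2)) by lra.
    apply Rmult_le_compat_l; lra. }
  assert (H4 : Rabs (tau / 2 * ox) <= tau / 2 * (S * X)).
  { rewrite Rabs_mult, (Rabs_pos_eq (tau / 2)) by lra.
    apply Rmult_le_compat_l; lra. }
  assert (T : X * (1 + tau / 2 * A) <= B * (1 + tau / 2 * A) + tau / 2 * (S * B)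
             + tau / 2 * (S * X) + tau * rho).
  { rewrite <- H1, E2.
    pose proof (Rabs_triang (y m * (1 - tau / 2 * A) - tau / 2 * oy - tau / 2 * ox) r).
    pose proof (Rabs_triang (y m * (1 - tau / 2 * A) - tau / 2 * oy) (- (tau / 2 * ox))).
    pose proof (Rabs_triang (y m * (1 - tau / 2 * A)) (- (tau / 2 * oy))).
    rewrite Rabs_Ropp in *. unfold Rminus in *. lra. }
  assert (P1 : tau * (S * X) <= tau * (A * X)).
  { apply Rmult_le_compat_l; [lra|]. apply Rmult_le_compat_r; lra. }
  assert (P2 : tau * (S * B) <= tau * (A * B)).
  { apply Rmult_le_compat_l; [lra|]. apply Rmult_le_compat_r; lra. }
  assert (P3 : tau * (A * B) <= tau * (C * B)).
  { apply Rmult_le_compat_l; [lra|]. apply Rmult_le_compat_r; lra. }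
  assert (E3 : X * (1 + tau / 2 * A) = X + tau / 2 * (A * X)) by ring.
  assert (E4 : B * (1 + tau / 2 * A) = B + tau / 2 * (A * B)) by ring.
  assert (E5 : (1 + tau * C) * B = B + tau * (C * B)) by ring.
  lra.
Qed.

Lemma exp_pow' x n : exp x ^ n = exp (INR n * x).
Proof.
  induction n as [|n IH]; simpl pow.
  - simpl. rewrite Rmult_0_l, exp_0. reflexivity.
  - rewrite IH, S_INR, <- exp_plus. f_equal. ring.
Qed.

Theorem theorem3p7
  (a b gamma T : R) (M N : nat)
  (u : R -> R -> R) (u0 : R -> R) (f : R -> R -> R)
  (d : nat -> R) (g : nat -> nat -> R)
  (U : nat -> nat -> R) (CR : R) :
  a < b -> 0 < gamma < 1 -> (2 <= M)%nat -> 0 < T -> (1 <= N)%nat ->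
  (forall i, (1 <= i <= 2 * M - 1)%nat ->
     improper_int (fun y => kern gamma (node a b M i) y) a b (node a b M i) (d i)) ->
  (forall i j, (1 <= i <= 2 * M - 1)%nat -> (j <= 2 * M)%nat ->
     improper_int (fun y => phi a b M j y * kern gamma (node a b M i) y)
       a b (node a b M i) (g i j)) ->
  (forall i j, (1 <= i <= 2 * M - 1)%nat -> (1 <= j <= 2 * M - 1)%nat -> 0 < g i j) ->
  (forall i, (1 <= i <= 2 * M - 1)%nat ->
     sum_f 1 (2 * M - 1)
       (fun j => if Nat.eqb i j then 0 else Rabs (Amat d g i j))
     < Rabs (Amat d g i i)) ->
  (forall x t, a < x < b -> 0 < t < T ->
     exists ut I,
       derivable_pt_lim (fun s => u x s) t ut /\
       improper_int (fun y => (u x t - u y t) * kern gamma x y) a b x I /\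
       ut + I = f x t) ->
  (forall x, a <= x <= b -> u x 0 = u0 x) ->
  (forall i, (1 <= i <= 2 * M - 1)%nat -> U 0%nat i = u0 (node a b M i)) ->
  (let tau := T / INR N in
   forall k i, (1 <= k <= N)%nat -> (1 <= i <= 2 * M - 1)%nat ->
     U k i + tau / 2 * Amul M d g (U k) i
     = U (k - 1)%nat i - tau / 2 * Amul M d g (U (k - 1)%nat) i
       + tau * f (node a b M i) ((INR (k - 1) * tau + INR k * tau) / 2)
       + tau * (/ 2 * g i 0%nat * (u a (INR (k - 1) * tau) + u a (INR k * tau))
                + / 2 * g i (2 * M)%nat * (u b (INR (k - 1) * tau) + u b (INR k * tau)))) ->
  (let tau := T / INR N in
   let h := mesh a b M in
   forall k i, (1 <= k <= N)%nat -> (1 <= i <= 2 * M - 1)%nat ->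
     Rabs (/ tau *
       ( u (node a b M i) (INR k * tau)
         + tau / 2 * Amul M d g (fun j => u (node a b M j) (INR k * tau)) i
         - ( u (node a b M i) (INR (k - 1) * tau)
             - tau / 2 * Amul M d g (fun j => u (node a b M j) (INR (k - 1) * tau)) i)
         - tau * f (node a b M i) ((INR (k - 1) * tau + INR k * tau) / 2)
         - tau * (/ 2 * g i 0%nat * (u a (INR (k - 1) * tau) + u a (INR k * tau))
                + / 2 * g i (2 * M)%nat * (u b (INR (k - 1) * tau) + u b (INR k * tau)))))
     <= CR * (tau ^ 2 + Rpower h (4 - gamma))) ->
  let tau := T / INR N in
  let h := mesh a b M in
  let Ca := 2 * Rpower (b - a) (1 - gamma) / (1 - gamma) in
  forall k i, (k <= N)%nat -> (1 <= i <= 2 * M - 1)%nat ->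
    Rabs (u (node a b M i) (INR k * tau) - U k i)
    <= CR * T * exp (T * Ca) * (tau ^ 2 + Rpower h (4 - gamma)).
Proof.
  intros Hab Hga HM HT HN Hd Hgij Hgpos Hdom Hsol Hu0 HU0 Hs Hres tau h Ca k0 i0 Hk0 Hi0.
  cbv zeta in Hs, Hres. fold tau in Hs, Hres. fold h in Hres.
  set (rho := CR * (tau ^ 2 + Rpower h (4 - gamma))).
  fold rho in Hres.
  assert (HNp : 0 < INR N) by (apply lt_0_INR; lia).
  assert (HMp : 0 < INR M) by (apply lt_0_INR; lia).
  assert (Htau : 0 < tau) by (unfold tau; apply Rdiv_lt_0_compat; lra).
  assert (HtN : tau * INR N = T) by (unfold tau; field; lra).
  assert (Hh : 0 < mesh a b M) by (unfold mesh; apply Rdiv_lt_0_compat; lra).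
  assert (HhM : mesh a b M * INR M = b - a) by (unfold mesh; field; lra).
  assert (Hnode : forall j, (1 <= j <= 2 * M - 1)%nat -> a < node a b M j < b).
  { intros j Hj. unfold node, xs.
    assert (1 <= INR j) by (apply (le_INR 1); lia).
    assert (INR j + 1 <= 2 * INR M).
    { replace (INR j + 1) with (INR (j + 1)) by (rewrite plus_INR; simpl; ring).
      replace (2 * INR M) with (INR (2 * M)) by (rewrite mult_INR; simpl; ring).
      apply le_INR; lia. }
    split; nra. }
  assert (HCa : 0 < Ca).
  { unfold Ca, Rdiv. apply Rmult_lt_0_compat; [|apply Rinv_0_lt_compat; lra].
    assert (0 < Rpower (b - a) (1 - gamma)) by (unfold Rpower; apply exp_pos). lra. }
  assert (HA : forall i, (1 <= i <= 2 * M - 1)%nat -> 0 <= Amat d g i i <= Ca).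
  { intros i Hi. unfold Amat. rewrite Nat.eqb_refl.
    pose proof (g_le_d gamma a b M (node a b M i) i (d i) (g i i) (Hnode i Hi) Hh
      (Hd i Hi) (Hgij i i Hi ltac:(lia))).
    pose proof (d_le gamma a b (node a b M i) (d i) (Hnode i Hi) Hga (Hd i Hi)).
    pose proof (Hgpos i i Hi Hi). unfold Ca. lra. }
  assert (HS : forall i, (1 <= i <= 2 * M - 1)%nat -> Soff M d g i < Rabs (Amat d g i i))
    by exact Hdom.
  assert (Hrho : 0 <= rho).
  { eapply Rle_trans; [apply Rabs_pos|]. apply (Hres 1%nat 1%nat); lia. }
  set (q := 1 + tau * Ca).
  assert (Hq : 1 <= q) by (unfold q; assert (0 <= tau * Ca) by (apply Rmult_le_pos; lra); lra).
  assert (Claim : forall k, (k <= N)%nat -> forall j, (1 <= j <= 2 * M - 1)%nat ->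
     Rabs (u (node a b M j) (INR k * tau) - U k j) <= INR k * tau * rho * q ^ k).
  { induction k as [|k IH]; intros Hk j Hj.
    - simpl INR. rewrite Rmult_0_l, Hu0 by (pose proof (Hnode j Hj); lra).
      rewrite HU0 by exact Hj. rewrite Rminus_diag, Rabs_R0. simpl. lra.
    - assert (HB : 0 <= INR k * tau * rho * q ^ k).
      { apply Rmult_le_pos; [|pose proof (pow_R1_Rle q k Hq); lra].
        apply Rmult_le_pos; [|lra]. apply Rmult_le_pos; [apply pos_INR|lra]. }
      eapply Rle_trans.
      + apply (step M d g tau Ca rho (INR k * tau * rho * q ^ k)
           (fun j => u (node a b M j) (INR (S k) * tau) - U (S k) j)
           (fun j => u (node a b M j) (INR k * tau) - U k j)); try lia; try lra; try assumption.
        * intros jj Hjj. apply IH; [lia|exact Hjj].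
        * intros ii Hii.
          pose proof (Hs (S k) ii ltac:(lia) Hii) as E.
          pose proof (Hres (S k) ii ltac:(lia) Hii) as Hr.
          replace (S k - 1)%nat with k in E, Hr by lia.
          match type of Hr with Rabs (/ tau * ?X) <= _ => exists X end.
          split.
          { rewrite Rabs_mult, (Rabs_pos_eq (/ tau)) in Hr by (left; apply Rinv_0_lt_compat; lra).
            apply (Rmult_le_reg_l (/ tau)); [apply Rinv_0_lt_compat; lra|].
            replace (/ tau * (tau * rho)) with rho by (field; lra). exact Hr. }
          rewrite (Amul_minus M d g (fun j => u (node a b M j) (INR (S k) * tau)) (U (S k))).
          rewrite (Amul_minus M d g (fun j => u (node a b M j) (INR k * tau)) (U k)).
          lra.
      + unfold q. rewrite S_INR. simpl pow. fold q.
        pose proof (pow_R1_Rle q (S k) Hq) as Hqk. simpl pow in Hqk.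
        assert (tau * rho <= tau * rho * (q * q ^ k)).
        { rewrite <- (Rmult_1_r (tau * rho)) at 1. apply Rmult_le_compat_l; [|lra].
          apply Rmult_le_pos; lra. }
        change (1 + tau * Ca) with q.
        assert (E2 : (INR k + 1) * tau * rho * (q * q ^ k)
                  = q * (INR k * tau * rho * q ^ k) + tau * rho * (q * q ^ k)) by ring.
        lra. }
  eapply Rle_trans; [apply Claim; assumption|].
  assert (K1 : INR k0 * tau <= T).
  { rewrite <- HtN, (Rmult_comm tau). apply Rmult_le_compat_r; [lra|]. apply le_INR; exact Hk0. }
  assert (K2 : q ^ k0 <= exp (T * Ca)).
  { eapply Rle_trans. apply pow_incr. split; [lra|]. apply exp_ineq1_le.
    rewrite exp_pow'.
    assert (INR k0 * (tau * Ca) <= T * Ca).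
    { rewrite <- Rmult_assoc. apply Rmult_le_compat_r; lra. }
    destruct (Req_dec (INR k0 * (tau * Ca)) (T * Ca)) as [->|]; [lra|].
    left. apply exp_increasing. lra. }
  assert (K0 : 0 <= INR k0 * tau) by (apply Rmult_le_pos; [apply pos_INR|lra]).
  assert (0 <= q ^ k0) by (pose proof (pow_R1_Rle q k0 Hq); lra).
  replace (CR * T * exp (T * Ca) * (tau ^ 2 + Rpower h (4 - gamma)))
    with (T * rho * exp (T * Ca)) by (unfold rho; ring).
  apply Rmult_le_compat; try lra.
  - apply Rmult_le_pos; lra.
  - apply Rmult_le_compat_r; lra.
Qed.
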